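(* Let $\tilde L$ be a minimum-size counterexample. Then $\tilde L$ contains at most one doubly irreducible element.
   Context: For a poset $P$, $x$ upper covers $y$ (and $y$ lower covers $x$) if $y<x$ with nothing strictly between. Join-irreducible: upper covers exactly one element; meet-irreducible: lower covers exactly one element; doubly irreducible: both. For $x\in P$, ${\uparrow}x=\{y: x\le y\}$. A counterexample is a finite lattice $L$ with $|L|>1$ in which every join-irreducible $j$ satisfies $|{\uparrow}j|>|L|/2$; a minimum-size counterexample is a counterexample $\tilde L$ such that no counterexample has fewer elements. *)

(* Defs.v *)
From mathcomp Require Import all_boot all_order.
Set Implicit Arguments. Unset Strict Implicit. Unset Printing Implicit Defensive.
Import Order.Theory.
Local Open Scope order_scope.

Definition covers (d : Order.disp_t) (T : finPOrderType d) (x y : T) : bool :=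
  (y < x) && [forall z : T, ~~ ((y < z) && (z < x))].

Definition join_irr (d : Order.disp_t) (T : finPOrderType d) (x : T) : bool :=
  #|[set y : T | covers x y]| == 1%N.

Definition meet_irr (d : Order.disp_t) (T : finPOrderType d) (x : T) : bool :=
  #|[set y : T | covers y x]| == 1%N.

Definition doubly_irr (d : Order.disp_t) (T : finPOrderType d) (x : T) : bool :=
  join_irr x && meet_irr x.

Definition upset (d : Order.disp_t) (T : finPOrderType d) (x : T) : {set T} :=
  [set y : T | x <= y].

Definition counterexample (d : Order.disp_t) (L : finLatticeType d) : Prop :=
  (1 < #|L|)%N /\ forall j : L, join_irr j -> (#|L| < 2 * #|upset j|)%N.

Definition min_counterexample (d : Order.disp_t) (L : finLatticeType d) : Prop :=
  counterexample L /\
  forall (d' : Order.disp_t) (L' : finLatticeType d'),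
    counterexample L' -> (#|L| <= #|L'|)%N.

(* Main.v *)
From HB Require Import structures.
Require Import Defs.
From mathcomp Require Import all_boot all_order.
From mathcomp Require Import zify.
Set Implicit Arguments. Unset Strict Implicit. Unset Printing Implicit Defensive.
Import Order.Theory.
Local Open Scope order_scope.

Ltac cnorm := intros;
  repeat match goal with H : context [@card.body _ _] |- _ => revert H end;
  repeat match goal with |- context [@card.body ?T ?A] =>
    let c := fresh "c" in set c := @card.body T A; clearbody c end;
  intros.

Section Gen.
Context (d : Order.disp_t) (L : finLatticeType d).

Lemma cover_lt (a b : L) : covers a b -> b < a.
Proof. by case/andP. Qed.

Lemma cover_below_aux (w : L) (n : nat) : forall z : L,
  (#|[set t : L | ((z < t) && (t < w))%O]| <= n)%N -> z < w ->
  exists c, z <= c /\ covers w c.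
Proof.
elim: n => [|n IH] z hc zw.
  exists z; split => //; rewrite /covers zw /=; apply/forallP => t.
  apply/negP => ht.
  have : (0 < #|[set t : L | ((z < t) && (t < w))%O]|)%N.
    by apply/card_gt0P; exists t; rewrite inE.
  by rewrite leqn0 in hc; rewrite (eqP hc).
case: (pickP (fun t => (z < t) && (t < w))) => [t /andP [zt tw]|none].
  have pr : [set u : L | (t < u) && (u < w)] \proper [set u : L | (z < u) && (u < w)].
    apply/properP; split.
      apply/subsetP => u; rewrite !inE => /andP [tu uw].
      by rewrite (lt_trans zt tu) uw.
    by exists t; rewrite !inE ?zt ?tw ?ltxx.
  have := proper_card pr => hlt.
  have [c [tc wc]] := IH t (leq_trans (leq_trans hlt hc) (leqnn _)) tw.
  by exists c; split => //; exact: le_trans (ltW zt) tc.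
exists z; split => //; rewrite /covers zw /=; apply/forallP => t.
by rewrite none.
Qed.

Lemma cover_below (z w : L) : z < w -> exists c, z <= c /\ covers w c.
Proof. exact: (@cover_below_aux w _ z (leqnn _)). Qed.

Lemma cover_above_aux (z : L) (n : nat) : forall w : L,
  (#|[set t : L | ((z < t) && (t < w))%O]| <= n)%N -> z < w ->
  exists c, covers c z /\ c <= w.
Proof.
elim: n => [|n IH] w hc zw.
  exists w; split => //; rewrite /covers zw /=; apply/forallP => t.
  apply/negP => ht.
  have : (0 < #|[set t : L | ((z < t) && (t < w))%O]|)%N.
    by apply/card_gt0P; exists t; rewrite inE.
  by rewrite leqn0 in hc; rewrite (eqP hc).
case: (pickP (fun t => (z < t) && (t < w))) => [t /andP [zt tw]|none].
  have pr : [set u : L | (z < u) && (u < t)] \proper [set u : L | (z < u) && (u < w)].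
    apply/properP; split.
      apply/subsetP => u; rewrite !inE => /andP [zu ut].
      by rewrite (lt_trans ut tw) zu.
    by exists t; rewrite !inE ?zt ?tw ?ltxx ?andbF.
  have := proper_card pr => hlt.
  have [c [tc wc]] := IH t (leq_trans (leq_trans hlt hc) (leqnn _)) zt.
  by exists c; split => //; exact: le_trans wc (ltW tw).
exists w; split => //; rewrite /covers zw /=; apply/forallP => t.
by rewrite none.
Qed.

Lemma cover_above (z w : L) : z < w -> exists c, covers c z /\ c <= w.
Proof. exact: (@cover_above_aux z _ w (leqnn _)). Qed.

Lemma meet_irr_up (x u z : L) : meet_irr x -> covers u x -> x < z -> u <= z.
Proof.
move=> /cards1P [c hc] hu xz.
have [c' [hc' c'z]] := cover_above xz.
have : c' \in [set y | covers y x] by rewrite inE.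
have : u \in [set y | covers y x] by rewrite inE.
by rewrite hc !inE => /eqP -> /eqP <-.
Qed.

Lemma join_irr_down (x l z : L) : join_irr x -> covers x l -> z < x -> z <= l.
Proof.
move=> /cards1P [c hc] hl zx.
have [c' [zc' hc']] := cover_below zx.
have : c' \in [set y | covers x y] by rewrite inE.
have : l \in [set y | covers x y] by rewrite inE.
by rewrite hc !inE => /eqP -> /eqP <-.
Qed.

Lemma meet_irr_ex (x : L) : meet_irr x -> exists u, covers u x.
Proof.
move=> /cards1P [c hc]; exists c.
have : c \in [set y | covers y x] by rewrite hc inE.
by rewrite inE.
Qed.

Lemma join_irr_ex (x : L) : join_irr x -> exists u, covers x u.
Proof.
move=> /cards1P [c hc]; exists c.
have : c \in [set y | covers x y] by rewrite hc inE.
by rewrite inE.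
Qed.

Lemma dirr_meet (x a b : L) : doubly_irr x -> a != x -> b != x -> a `&` b != x.
Proof.
case/andP => hj hm ha hb; apply/eqP => e.
have [u hu] := meet_irr_ex hm.
have xa : x < a by rewrite lt_neqAle eq_sym ha -e leIl.
have xb : x < b by rewrite lt_neqAle eq_sym hb -e leIr.
have ua := meet_irr_up hm hu xa; have ub := meet_irr_up hm hu xb.
have : u <= x by rewrite -e lexI ua ub.
by rewrite lt_geF // (cover_lt hu).
Qed.

Lemma dirr_join (x a b : L) : doubly_irr x -> a != x -> b != x -> a `|` b != x.
Proof.
case/andP => hj hm ha hb; apply/eqP => e.
have [u hu] := join_irr_ex hj.
have xa : a < x by rewrite lt_neqAle ha -e leUl.
have xb : b < x by rewrite lt_neqAle hb -e leUr.
have ua := join_irr_down hj hu xa; have ub := join_irr_down hj hu xb.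
have : x <= u by rewrite -e leUx ua ub.
by rewrite lt_geF // (cover_lt hu).
Qed.

Lemma bound_cov (x y a : L) : (4 <= #|L|)%N -> meet_irr x -> x != y -> covers a x ->
  (#|L| < 2 * #|upset x|)%N -> (#|L| < 2 * #|upset y|)%N ->
  (#|L| - 2 < 2 * #|upset a :\: [set x; y]|)%N.
Proof.
move=> h4 hm hxy hax hx hy.
have xa := cover_lt hax.
have xA : x \notin upset a by rewrite inE lt_geF.
have hUx : (#|upset x| <= #|upset a| + 1)%N.
  have : upset x \subset x |: upset a.
    apply/subsetP => z; rewrite !inE => xz.
    case: (eqVneq z x) => //= zx.
    apply: (meet_irr_up hm hax); by rewrite lt_neqAle eq_sym zx.
  move/subset_leq_card; rewrite cardsU1 xA; cnorm; lia.
have hID := cardsID [set x; y] (upset a).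
case yA: (y \in upset a).
  have h1 : (#|upset a :&: [set x; y]| <= 1)%N.
    rewrite -(cards1 y); apply: subset_leq_card; apply/subsetP => z.
    rewrite !inE => /andP [za /orP [/eqP zx|/eqP zy]].
      by move: xA; rewrite inE -zx za.
    by rewrite zy.
  have xy : x < y by rewrite inE in yA; exact: lt_le_trans xa yA.
  have hUy : (#|upset y| + 1 <= #|upset x|)%N.
    have : x |: upset y \subset upset x.
      apply/subsetP => z; rewrite !inE => /orP [/eqP ->|yz] //.
      exact: le_trans (ltW xy) yz.
    move/subset_leq_card; rewrite cardsU1 inE lt_geF //= ; idtac.
cnorm; lia.
  cnorm; lia.
have h0 : (#|upset a :&: [set x; y]| <= 0)%N.
  rewrite -(cards0 L); apply: subset_leq_card; apply/subsetP => z.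
  rewrite !inE => /andP [za /orP [/eqP zx|/eqP zy]].
    by move: xA; rewrite inE -zx za.
  by move: yA; rewrite inE -zy za.
cnorm; lia.
Qed.

Lemma bound_noncov (x y a : L) : (4 <= #|L|)%N -> a != x ->
  (#|L| < 2 * #|upset a|)%N -> (#|L| < 2 * #|upset x|)%N ->
  (#|L| - 2 < 2 * #|upset a :\: [set x; y]|)%N.
Proof.
move=> h4 hax hA hx.
have hID := cardsID [set x; y] (upset a).
case xA: (x \in upset a).
  have h2 : (#|upset a :&: [set x; y]| <= 2)%N.
    apply: leq_trans (subset_leq_card (subsetIr _ _)) _.
    by rewrite cards2; case: (x != y).
  have hU : (#|upset x| + 1 <= #|upset a|)%N.
    rewrite inE in xA.
    have : a |: upset x \subset upset a.
      apply/subsetP => z; rewrite !inE => /orP [/eqP ->|xz] //.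
      exact: le_trans xA xz.
    move/subset_leq_card; rewrite cardsU1 inE.
    have -> : (x <= a) = false.
      apply/negP => xa; move/eqP: hax; apply; by apply: le_anti; rewrite xA xa.
    cnorm; lia.
  cnorm; lia.
have h1 : (#|upset a :&: [set x; y]| <= 1)%N.
  rewrite -(cards1 y); apply: subset_leq_card; apply/subsetP => z.
  rewrite !inE => /andP [za /orP [/eqP zx|/eqP zy]].
    by move: xA; rewrite inE -zx za.
  by rewrite zy.
cnorm; lia.
Qed.

Lemma up_small (u w c : L) : w != c -> ~~ (u <= w) -> ~~ (u <= c) ->
  (#|upset u| <= #|L| - 2)%N.
Proof.
move=> hwc hw hc.
have : upset u \subset ~: [set w; c].
  apply/subsetP => z; rewrite !inE => uz; apply/negP => /orP [/eqP e|/eqP e];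
  by move: uz; rewrite e; apply/negP.
move/subset_leq_card; have := cardsC [set w; c]; rewrite cards2 hwc; cnorm; lia.
Qed.

End Gen.

Section Sub.
Context (d : Order.disp_t) (L : finLatticeType d) (x y : L).
Definition P2 := [pred z : L | (z != x) && (z != y)].
Context (mc : meet_closed P2) (jc : join_closed P2).
Definition S2T (m : meet_closed P2) (j : join_closed P2) := {z : L | P2 z}.
Local Notation S2 := (S2T mc jc).
HB.instance Definition _ := Finite.copy S2 {z : L | P2 z}.
HB.instance Definition _ := SubType.copy S2 {z : L | P2 z}.
HB.instance Definition _ := Order.SubChoice_isSubLattice.Build d L P2 d S2 mc jc.

Lemma card_S2 : x != y -> #|{: S2}| = (#|L| - 2)%N.
Proof.
move=> hxy.
have -> : #|{: S2}| = #|[pred z | P2 z]| by exact: card_sig.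
have -> : #|[pred z | P2 z]| = #|~: [set x; y]|.
  by apply: eq_card => z; rewrite !inE negb_or.
have := cardsC [set x; y]; rewrite cards2 hxy; cnorm; lia.
Qed.

Lemma upset_S2 (s : S2) : #|upset s| = #|upset (val s) :\: [set x; y]|.
Proof.
rewrite -(card_imset _ val_inj); apply: eq_card => z.
have -> : z \in [set val t | t in upset s] = (z \in upset (val s) :\: [set x; y]).
  apply/imsetP/idP.
    move=> [t ht ->]; rewrite inE -Order.le_val in ht; rewrite !inE ht andbT.
    by have := valP t; rewrite /P2 inE negb_or.
  rewrite !inE negb_or => /andP [pz sz].
  exists (exist _ z pz) => //.
  by rewrite inE -Order.le_val.
by [].
Qed.

Lemma covers_S2 (s c : S2) : ~~ covers (val s) x -> ~~ covers (val s) y ->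
  covers s c = covers (val s) (val c).
Proof.
move=> nx ny; rewrite /covers -Order.SubPreorderTheory.lt_val; congr andb.
apply/forallP/forallP => H z.
  apply/negP => /andP [cz zs].
  have [w [zw hw]] := cover_below zs.
  have pw : P2 w.
    rewrite /P2 inE; apply/andP; split; apply/eqP => e.
      by rewrite -e hw in nx.
    by rewrite -e hw in ny.
  have := H (exist _ w pw); rewrite -!Order.SubPreorderTheory.lt_val /=.
  by rewrite (lt_le_trans cz zw) (cover_lt hw).
by have := H (val z); rewrite !Order.SubPreorderTheory.lt_val.
Qed.

Lemma join_irr_S2 (s : S2) : ~~ covers (val s) x -> ~~ covers (val s) y ->
  join_irr s -> join_irr (val s).
Proof.
move=> nx ny; rewrite /join_irr.
have -> : [set c : L | covers (val s) c] = val @: [set c : S2 | covers s c].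
  apply/setP => z; rewrite inE; apply/idP/imsetP.
    move=> hz.
    have pz : P2 z.
      rewrite /P2 inE; apply/andP; split; apply/eqP => e.
        by rewrite -e hz in nx.
      by rewrite -e hz in ny.
    by exists (exist _ z pz) => //; rewrite inE covers_S2.
  by move=> [t]; rewrite inE covers_S2 // => ht ->.
by rewrite card_imset //; exact: val_inj.
Qed.

End Sub.

Theorem theorem2p6 (d : Order.disp_t) (L : finLatticeType d) :
  min_counterexample L -> (#|[set x : L | doubly_irr x]| <= 1)%N.
Proof.
move=> [[h1 hce] hmin]; rewrite leqNgt; apply/negP => /card_gt1P [x [y [hx hy hxy]]].
rewrite !inE in hx hy.
have hjx : join_irr x by case/andP: hx.
have hjy : join_irr y by case/andP: hy.
have ux := hce x hjx; have uy := hce y hjy.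
have [cx hcx] := join_irr_ex hjx.
have [cy hcy] := join_irr_ex hjy.
have h4 : (4 <= #|L|)%N.
  have ltcx := cover_lt hcx; have ltcy := cover_lt hcy.
  have [u [hju hu]] : exists u : L, join_irr u /\ (#|upset u| <= #|L| - 2)%N.
    case: (boolP (x <= y)) => xy.
      exists y; split => //; apply: (up_small (w := x) (c := cx)).
      - by rewrite eq_sym lt_eqF.
      - by apply/negP => yx; move/eqP: hxy; apply; apply: le_anti; rewrite xy yx.
      - apply/negP => ycx; have : y < x by exact: le_lt_trans ycx ltcx.
        by move/(le_lt_trans xy); rewrite ltxx.
    case: (boolP (y <= x)) => yx.
      exists x; split => //; apply: (up_small (w := y) (c := cy)).
      - by rewrite eq_sym lt_eqF.
      - by [].
      - apply/negP => xcy; have : x < y by exact: le_lt_trans xcy ltcy.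
        by move/ltW; rewrite (negbTE xy).
    exists x; split => //; apply: (up_small (w := y) (c := cx)).
    - by apply/eqP => e; move: yx; rewrite e (ltW ltcx).
    - by [].
    - by rewrite (lt_geF ltcx).
  have := hce u hju; cnorm; lia.
have mc : meet_closed (P2 x y).
  move=> a b; rewrite !inE => /andP [ax ay] /andP [bx by'].
  by rewrite (dirr_meet hx ax bx) (dirr_meet hy ay by').
have jc : join_closed (P2 x y).
  move=> a b; rewrite !inE => /andP [ax ay] /andP [bx by'].
  by rewrite (dirr_join hx ax bx) (dirr_join hy ay by').
have ceS : counterexample (@S2T d L x y mc jc).
  split; first by rewrite card_S2 //; cnorm; lia.
  move=> j hj; rewrite card_S2 // upset_S2.
  have := valP j; rewrite /P2 inE => /andP [jx jy].
  case: (boolP (covers (val j) x)) => cjx.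
    by apply: (bound_cov h4) => //; case/andP: hx.
  case: (boolP (covers (val j) y)) => cjy.
    rewrite setUC; apply: (bound_cov h4) => //; first by case/andP: hy.
    by rewrite eq_sym.
  have hjj := join_irr_S2 cjx cjy hj.
  have := bound_noncov y h4 jx (hce _ hjj) ux; cnorm; lia.
have := hmin _ _ ceS; rewrite card_S2 //; cnorm; lia.
Qed.
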